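(* Let $p$ be a prime, $q$ a power of $p$, $V$ a finite-dimensional $\mathbb{F}_q$-vector space, and $k=q^ar$ with integers $a\ge0$, $1\le r\le q-1$. For each nonzero $y\in V^*$ and any linear complement $W$ of $\mathbb{F}_q y$ in $V^*$, one has the equality of ideals of $\mathrm{Sym}^*(V^* )$ $$I(V^*,k)+(y^k)=I(W,qk)+(y^k),$$ where $I(W,qk)$ denotes the ideal of $\mathrm{Sym}^*(V^* )$ generated by the generators of $I(W,qk)\subset\mathrm{Sym}^*(W)$.
   Context: For a finite-dimensional $\mathbb{F}_q$-vector space $U$ (here $U=V^*$ or $U=W$), fix for each line $\ell$ of $U$ a nonzero $u_\ell\in\ell$; for a hyperplane $H$ of $U$, $V_{H,U}=\prod_{\ell\subset U,\ \ell\not\subset H}u_\ell$; $I(U,m)$ is the ideal of $\mathrm{Sym}^*(U)$ generated by all $V_{H,U}^m$ with $H$ a hyperplane of $U$ (independent, up to units, of the choice of $u_\ell$). *)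

(* Defs.v *)
From HB Require Import structures.
From mathcomp Require Import all_boot all_order all_algebra.
From mathcomp Require Import mpoly.
Set Implicit Arguments. Unset Strict Implicit. Unset Printing Implicit Defensive.
Import GRing.Theory.
Local Open Scope ring_scope.

(* V^* is identified with the row space 'rV[F]_n (a basis of V^* is fixed),
   so Sym^*(V^* ) is the polynomial ring {mpoly F[n]}.  Subspaces of V^* are
   represented by matrices (their row spaces, mxalgebra). *)

Definition lin (F : fieldType) (n : nat) (v : 'rV[F]_n) : {mpoly F[n]} :=
  \sum_(i < n) v 0 i *: 'X_i.

Definition lines (F : finFieldType) (n : nat) (U : 'M[F]_n) : {set 'M[F]_n} :=
  [set <<v>>%MS | v in [set v : 'rV[F]_n | (v != 0) && (v <= U)%MS]].

(* V_{H,U} = prod of u_l over lines l of U not contained in H,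
   where u : lines -> nonzero representative vectors *)
Definition VHU (F : finFieldType) (n : nat) (u : 'M[F]_n -> 'rV[F]_n)
  (H U : 'M[F]_n) : {mpoly F[n]} :=
  \prod_(l in lines U | ~~ (l <= H)%MS) lin (u l).

(* g is one of the generators V_{H,U}^m of I(U,m), H a hyperplane of U *)
Definition Igen (F : finFieldType) (n : nat) (u : 'M[F]_n -> 'rV[F]_n)
  (U : 'M[F]_n) (m : nat) (g : {mpoly F[n]}) : Prop :=
  exists H : 'M[F]_n, (H <= U)%MS /\ (\rank H).+1 = \rank U /\ g = VHU u H U ^+ m.

Definition in_ideal (R : comNzRingType) (P : R -> Prop) (x : R) : Prop :=
  exists s : seq (R * R),
    (forall pr, pr \in s -> P pr.2) /\ x = \sum_(pr <- s) pr.1 * pr.2.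

(* Main.v *)
Require Import Defs.
From HB Require Import structures.
From mathcomp Require Import all_boot all_order all_algebra.
From mathcomp Require Import mpoly.
From mathcomp Require Import finfield.
From mathcomp Require Import zify ring.
Set Implicit Arguments. Unset Strict Implicit. Unset Printing Implicit Defensive.
Import GRing.Theory.
Local Open Scope ring_scope.

Section Ideal.
Variable R : comNzRingType.
Implicit Types P Q : R -> Prop.

Lemma in_ideal0 P : in_ideal P 0.
Proof. by exists [::]; split => //; rewrite big_nil. Qed.

Lemma in_ideal_gen P g : P g -> in_ideal P g.
Proof.
move=> Pg; exists [:: (1, g)]; split; first by move=> pr; rewrite inE => /eqP ->.
by rewrite big_seq1 mul1r.
Qed.

Lemma in_idealD P x y : in_ideal P x -> in_ideal P y -> in_ideal P (x + y).
Proof.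
move=> [s [hs ->]] [t [ht ->]]; exists (s ++ t); split; last by rewrite big_cat.
by move=> pr; rewrite mem_cat => /orP[/hs|/ht].
Qed.

Lemma in_idealMl P a x : in_ideal P x -> in_ideal P (a * x).
Proof.
move=> [s [hs ->]]; exists [seq (a * pr.1, pr.2) | pr <- s]; split.
  by move=> pr /mapP [pr' /hs h ->].
by rewrite big_map mulr_sumr; apply: eq_bigr => i _; rewrite mulrA.
Qed.

Lemma in_ideal_trans P Q f : (forall g, P g -> in_ideal Q g) -> in_ideal P f -> in_ideal Q f.
Proof.
move=> hPQ [s [hs ->]]; elim: s hs => [|pr s IH] hs; first by rewrite big_nil; apply: in_ideal0.
rewrite big_cons; apply: in_idealD; first by apply: in_idealMl; apply: hPQ; apply: hs; rewrite inE eqxx.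
by apply: IH => pr' h; apply: hs; rewrite inE h orbT.
Qed.

Definition cg (b x y : R) := exists t, x = y + b * t.

Lemma cg_refl b x : cg b x x.
Proof. by exists 0; rewrite mulr0 addr0. Qed.

Lemma cgM b x x' y y' : cg b x x' -> cg b y y' -> cg b (x * y) (x' * y').
Proof.
move=> [t ->] [s ->]; exists (t * y' + x' * s + b * t * s).
by rewrite !mulrDl !mulrDr; ring.
Qed.


Lemma cgD b x x' y y' : cg b x x' -> cg b y y' -> cg b (x + y) (x' + y').
Proof. by move=> [t ->] [s ->]; exists (t + s); ring. Qed.

Lemma cgX b x x' m : cg b x x' -> cg b (x ^+ m) (x' ^+ m).
Proof.
move=> h; elim: m => [|m IH]; first by rewrite !expr0; apply: cg_refl.
by rewrite !exprS; apply: cgM.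
Qed.

Lemma cg_prod (I : finType) (P : pred I) b (f g : I -> R) :
  (forall i, P i -> cg b (f i) (g i)) -> cg b (\prod_(i | P i) f i) (\prod_(i | P i) g i).
Proof.
move=> h; elim/big_rec2: _ => [|i x1 x2 Pi hx]; first exact: cg_refl.
by apply: cgM => //; apply: h.
Qed.

Lemma cg_trans b x y z : cg b x y -> cg b y z -> cg b x z.
Proof. by move=> [t ->] [s ->]; exists (s + t); ring. Qed.

Lemma cg_sym b x y : cg b x y -> cg b y x.
Proof. by move=> [t ->]; exists (- t); ring. Qed.

End Ideal.

Lemma cgZ (F : fieldType) (A : comAlgType F) (b x y : A) (c : F) :
  cg b x y -> cg b (c *: x) (c *: y).
Proof. by move=> [t ->]; exists (c *: t); rewrite scalerDr scalerAr. Qed.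

Lemma genpoly_eval (F : finFieldType) (K : comNzRingType) (f : {rmorphism F -> K}) (t : K) :
  t ^+ #|F| - t = \prod_x (t - f x).
Proof.
have := congr1 (fun p => (map_poly f p).[t]) (finField_genPoly F) => /=.
rewrite rmorphB /= map_polyXn map_polyX !hornerE => ->.
rewrite rmorph_prod /= horner_prod; apply: eq_bigr => x _.
by rewrite map_polyXsubC hornerXsubC.
Qed.

Section Frob.
Variables (F : finFieldType) (n : nat).
Local Notation A := {mpoly F[n]}.

Lemma frobq (x y : A) : (x + y) ^+ #|F| = x ^+ #|F| + y ^+ #|F|.
Proof.
have [p _ pF] := finPcharP F.
have pA : p \in [pchar A] by rewrite (pchar_lalg A).
rewrite (card_pprimeChar pF).
elim: (logn _ _) => [|m IH]; first by rewrite !expr1.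
by rewrite expnSr !exprM IH -!(pFrobenius_autE pA) rmorphD.
Qed.

Lemma frobqa (x y : A) a : (x + y) ^+ (#|F| ^ a) = x ^+ (#|F| ^ a) + y ^+ (#|F| ^ a).
Proof.
elim: a => [|a IH]; first by rewrite !expr1.
by rewrite expnSr !exprM IH frobq.
Qed.

Lemma card_gt1 : (1 < #|F|)%N.
Proof. exact: finNzRing_gt1. Qed.

Local Notation tf := (@FracField.tofrac A).
Local Notation g := (tf \o in_alg A).

Lemma prod_lin_identity (z Y : A) :
  \prod_(c : F) (z + c *: Y) = z ^+ #|F| - z * Y ^+ #|F|.-1.
Proof.
have q1 := card_gt1.
have [->|Y0] := eqVneq Y 0.
  under eq_bigr do rewrite scaler0 addr0.
  by rewrite prodr_const cardT -cardE expr0n /=; case: #|F| q1 => [|[]]//= m _; rewrite mulr0 subr0.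
pose Z := tf z; pose Y' := tf Y.
have Y'0 : Y' != 0 by rewrite /Y' tofrac_eq0.
apply/eqP; rewrite -(tofrac_eq (R:=A)); apply/eqP.
rewrite rmorphB rmorphM !rmorphXn.
rewrite (rmorph_prod tf) (eq_bigr (fun c => Z + g c * Y')); last first.
  by move=> c _; rewrite rmorphD -mulr_algl rmorphM.
change (\prod_i (Z + g i * Y') = Z ^+ #|F| - Z * Y' ^+ #|F|.-1).
pose t := Z / Y'.
have hZ : Z = Y' * t by rewrite /t mulrC divfK.
have -> : Z ^+ #|F| - Z * Y' ^+ #|F|.-1 = Y' ^+ #|F| * (t ^+ #|F| - t).
  rewrite hZ exprMn mulrBr; congr (_ - _).
  by rewrite mulrAC -exprS prednK // ltnW.
rewrite (genpoly_eval (tf \o in_alg A)).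
have -> : Y' ^+ #|F| = \prod_(x : F) Y' by rewrite prodr_const cardT -cardE.
rewrite -big_split /= (reindex_inj oppr_inj) /=.
apply: eq_bigr => x _ /=.
by rewrite scaleNr rmorphN mulNr hZ; ring.
Qed.

End Frob.

Section Lines.
Variables (F : finFieldType) (n : nat) (u : 'M[F]_n -> 'rV[F]_n).
Hypothesis hu : forall l, l \in lines (1%:M : 'M[F]_n) -> u l != 0 /\ (u l <= l)%MS.

Lemma linD (v w : 'rV[F]_n) : lin (v + w) = lin v + lin w.
Proof. by rewrite /lin -big_split; apply: eq_bigr => i _; rewrite mxE scalerDl. Qed.

Lemma linZ (a : F) (v : 'rV[F]_n) : lin (a *: v) = a *: lin v.
Proof. by rewrite /lin scaler_sumr; apply: eq_bigr => i _; rewrite mxE scalerA. Qed.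

Definition phi (c : 'cV[F]_n) (v : 'rV[F]_n) : F := (v *m c) 0 0.

Lemma phiD c v w : phi c (v + w) = phi c v + phi c w.
Proof. by rewrite /phi mulmxDl mxE. Qed.

Lemma phiZ c a v : phi c (a *: v) = a * phi c v.
Proof. by rewrite /phi -scalemxAl mxE. Qed.

Lemma phi0 c : phi c 0 = 0.
Proof. by rewrite /phi mul0mx mxE. Qed.

Lemma lines_W (U : 'M[F]_n) l : l \in lines U -> l \in lines 1%:M.
Proof.
case/imsetP => v; rewrite inE => /andP[v0 _] ->.
by apply/imsetP; exists v => //; rewrite inE v0 submx1.
Qed.

Lemma line_sub (U : 'M[F]_n) l : l \in lines U -> (l <= U)%MS.
Proof. by case/imsetP => v; rewrite inE => /andP[_ vU] ->; rewrite genmxE. Qed.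

Lemma line_gen l : l \in lines 1%:M -> l = <<u l>>%MS.
Proof.
move=> hl; have [u0 ul] := hu hl; move: u0 ul.
case/imsetP: hl => v; rewrite inE => /andP[v0 _] -> u0.
rewrite genmxE => /sub_rVP [a ea].
have a0 : a != 0 by apply: contraNneq u0 => a0; rewrite ea a0 scale0r.
by apply/eq_genmx; rewrite ea; apply/eqmx_sym/eqmx_scale.
Qed.

Lemma VHU_phi (U H : 'M[F]_n) (c : 'cV[F]_n) :
  (forall v, (v <= U)%MS -> (v <= H)%MS = (phi c v == 0)) ->
  exists2 k : F, k != 0 & VHU u H U = k *: \prod_(v | (v <= U)%MS && (phi c v == 1)) lin v.
Proof.
move=> hk.
pose S := [set l in lines U | ~~ (l <= H)%MS].
have hS : forall l, l \in S -> [/\ u l != 0, (u l <= U)%MS, phi c (u l) != 0 & l = <<u l>>%MS].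
  move=> l; rewrite inE => /andP[lU lH]; have l1 := lines_W lU.
  have [u0 ul] := hu l1; have gl := line_gen l1.
  have uU : (u l <= U)%MS := submx_trans ul (line_sub lU).
  split => //; rewrite -hk //; apply: contra lH => uH.
  by rewrite gl genmxE.
pose gv l := (phi c (u l))^-1 *: u l.
have ggv : forall l, l \in S -> <<gv l>>%MS = <<u l>>%MS.
  move=> l /hS [_ _ p0 _]; apply/eq_genmx/eqmx_scale; by rewrite invr_eq0.
have e1 : VHU u H U = \prod_(l in S) (phi c (u l) *: lin (gv l)).
  rewrite /VHU; apply: eq_big => [l|l hl]; first by rewrite inE.
  have [_ _ p0 _] : [/\ u l != 0, (u l <= U)%MS, phi c (u l) != 0 & l = <<u l>>%MS].
    by apply: hS; rewrite inE.
  by rewrite /gv linZ scalerA divff ?scale1r.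
rewrite e1 scaler_prod.
exists (\prod_(l in S) phi c (u l)).
  by apply/prodf_neq0 => l /hS [].
congr (_ *: _).
rewrite -(big_imset _ (h:=gv)); last first.
  move=> l1 l2 h1 h2 e.
  have [_ _ _ g1] := hS _ h1; have [_ _ _ g2] := hS _ h2.
  by rewrite g1 g2 -(ggv _ h1) -(ggv _ h2) e.
apply: eq_bigl => v; apply/imsetP/andP.
  move=> [l hl ->]; have [_ uU p0 _] := hS _ hl.
  by split; [apply: scalemx_sub | rewrite /gv phiZ mulVf].
move=> [vU /eqP p1].
have v0 : v != 0 by apply/eqP => v0; move: p1; rewrite v0 phi0 => /eqP; rewrite eq_sym oner_eq0.
have lU : <<v>>%MS \in lines U by apply/imsetP; exists v; rewrite // inE v0 vU.
have lS : <<v>>%MS \in S.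
  by rewrite inE lU /= genmxE hk // p1 oner_eq0.
exists <<v>>%MS => //.
have [u0 ul] := hu (lines_W lU); move: ul; rewrite genmxE => /sub_rVP [a ea].
have a0 : a != 0 by apply: contraNneq u0 => a0; rewrite ea a0 scale0r.
by rewrite /gv ea phiZ p1 mulr1 scalerA mulVf ?scale1r.
Qed.

End Lines.

Lemma hyper_phi (F : finFieldType) (n : nat) (H : 'M[F]_n) : (\rank H).+1 = n ->
  exists c : 'cV[F]_n, forall v, (v <= H)%MS = (phi c v == 0).
Proof.
move=> rH; set M := cokermx H.
have rM : \rank M = 1%N by rewrite mxrank_coker; lia.
have M0 : M != 0 by rewrite -mxrank_eq0 rM.
have [i zi] : exists i, row i M != 0.
  case: (pickP (fun i => row i M != 0)) => [i hi|h]; first by exists i.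
  move/negP: M0 => []; apply/eqP/row_matrixP => i.
  by move: (h i) => /negbFE/eqP ->; rewrite row0.
set z := row i M in zi.
have [j zj] : exists j, z 0 j != 0.
  case: (pickP (fun j => z 0 j != 0)) => [j hj|h]; first by exists j.
  move/negP: zi => []; apply/eqP/rowP => j.
  by move: (h j) => /negbFE/eqP ->; rewrite mxE.
have : (z == M)%MS by rewrite -(mxrank_leqif_eq (row_sub i M)).2 rank_rV zi rM.
case/andP => _ Mz.
exists (col j M) => v.
rewrite submxE -/M.
have ephi : phi (col j M) v = (v *m M) 0 j.
  by rewrite /phi !mxE; apply: eq_bigr => k _; rewrite mxE.
have /sub_rVP [b eb] : (v *m M <= z)%MS := submx_trans (submxMl v M) Mz.
by rewrite ephi eb mxE scaler_eq0 mulf_eq0 (negPf zi) (negPf zj) !orbF.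
Qed.

Lemma inj_helper (F : fieldType) (n : nat) (w1 w2 y : 'rV[F]_n) (b1 b2 : F) :
  w1 + b1 *: y = w2 + b2 *: y -> w1 - w2 = (b2 - b1) *: y.
Proof.
move=> e; rewrite -(addrKA (b1 *: y) w1 w2) e.
by rewrite [w2 + _]addrC [b1 *: y + w2]addrC addrKA scalerBl.
Qed.

Section Core.
Variables (F : finFieldType) (n : nat) (u : 'M[F]_n -> 'rV[F]_n).
Hypothesis hu : forall l, l \in lines (1%:M : 'M[F]_n) -> u l != 0 /\ (u l <= l)%MS.
Variables (y : 'rV[F]_n) (W : 'M[F]_n).
Hypotheses (hy : y != 0) (hW1 : ((W :&: y)%MS == (0 : 'M[F]_n))%MS)
  (hW2 : ((W + y)%MS == (1%:M : 'M[F]_n))%MS).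

Lemma decomp (c : 'cV[F]_n) : phi c y = 0 ->
  \prod_(v | (v <= 1%:M)%MS && (phi c v == 1)) lin v =
  \prod_(w | (w <= W)%MS && (phi c w == 1)) \prod_(b : F) lin (w + b *: y).
Proof.
move=> hcy; rewrite pair_big /=.
pose T := [set p : 'rV[F]_n * F | (p.1 <= W)%MS && (phi c p.1 == 1)].
pose h (p : 'rV[F]_n * F) := p.1 + p.2 *: y.
transitivity (\prod_(p in T) lin (h p)); last by apply: eq_bigl => p; rewrite inE andbT.
rewrite -(big_imset _ (h:=h)); last first.
  move=> [w1 b1] [w2 b2]; rewrite !inE /h /= => /andP[w1W _] /andP[w2W _] e.
  move: e; rewrite /h /= => e.
  have e2 := inj_helper e.
  have : (w1 - w2 <= W :&: y)%MS.
    rewrite sub_capmx addmx_sub ?eqmx_opp //= e2 scalemx_sub //.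
  move/submx_trans => /(_ _ _ (proj1 (andP hW1))); rewrite submx0 e2 scaler_eq0 (negPf hy) orbF.
  rewrite subr_eq0 => /eqP eb; move: e2; rewrite eb subrr scale0r => /subr0_eq ->.
  by [].
apply: eq_bigl => v; apply/andP/imsetP; last first.
  move=> [[w b]]; rewrite inE /= => /andP [wW /eqP pw] ->.
  by rewrite submx1 /h phiD phiZ hcy mulr0 addr0 pw.
move=> [_ /eqP pv].
have : (v <= W + y)%MS := submx_trans (submx1 v) (proj2 (andP hW2)).
case/sub_addsmxP => [[u1 u2] /= ev].
have /sub_rVP [b eb] : (u2 *m y <= y)%MS := submxMl _ _.
exists (u1 *m W, b); last by rewrite /h /= ev eb.
rewrite inE /= submxMl /=; apply/eqP.
by move: pv; rewrite ev eb phiD phiZ hcy mulr0 addr0.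
Qed.

Variables (a r : nat).
Hypothesis hr : (1 <= r <= #|F|.-1)%N.
Local Notation q := #|F|.
Local Notation k := (q ^ a * r)%N.
Local Notation Y := (lin y).

Lemma key_cg (z : {mpoly F[n]}) :
  cg (Y ^+ k) ((z ^+ q - z * Y ^+ q.-1) ^+ k) (z ^+ (q * k)).
Proof.
rewrite [X in cg _ X _]exprM (frobqa (z ^+ q)) -mulNr exprMn -[in X in cg _ X _]exprM -(exprM Y).
have hk : (k <= q.-1 * q ^ a)%N by rewrite mulnC; apply: leq_mul => //; case/andP: hr.
rewrite -(subnKC hk) exprD.
have -> : z ^+ (q * k) = (z ^+ (q * q ^ a)) ^+ r by rewrite -exprM mulnA.
apply: cgX; exists ((- z) ^+ (q ^ a) * Y ^+ (q.-1 * q ^ a - k)).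
by rewrite mulrCA.
Qed.

Lemma core (H H' : 'M[F]_n) (c : 'cV[F]_n) :
  (forall v, (v <= H)%MS = (phi c v == 0)) ->
  (forall v, (v <= W)%MS -> (v <= H')%MS = (phi c v == 0)) ->
  (y <= H)%MS ->
  exists2 kk : F, kk != 0 & cg (Y ^+ k) (VHU u H 1%:M ^+ k) (kk *: VHU u H' W ^+ (q * k)).
Proof.
move=> hH hH' yH.
have hcy : phi c y = 0 by apply/eqP; rewrite -hH.
have [k1 k10 e1] := VHU_phi hu (U:=1%:M) (H:=H) (c:=c) (fun v _ => hH v).
have [k2 k20 e2] := VHU_phi hu (U:=W) (H:=H') (c:=c) hH'.
rewrite (decomp hcy) in e1.
exists (k1 ^+ k / k2 ^+ (q * k)).
  by rewrite mulf_neq0 ?invr_eq0 ?expf_neq0.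
rewrite e1 e2 !exprZn scalerA divfK ?expf_neq0 //.
apply: cgZ; rewrite -!prodrXl; apply: cg_prod => w _.
under eq_bigr do rewrite linD linZ.
rewrite prod_lin_identity; exact: key_cg.
Qed.

End Core.

Unset Implicit Arguments.
Set Strict Implicit.

Theorem lemma4p5 (F : finFieldType) (n a r : nat) (u : 'M[F]_n -> 'rV[F]_n)
  (hu : forall l, l \in lines (1%:M : 'M[F]_n) -> u l != 0 /\ (u l <= l)%MS)
  (hr : (1 <= r <= #|F|.-1)%N)
  (y : 'rV[F]_n) (W : 'M[F]_n)
  (hy : y != 0) (hW1 : ((W :&: y)%MS == (0 : 'M[F]_n))%MS) (hW2 : ((W + y)%MS == (1%:M : 'M[F]_n))%MS) :
  let k := (#|F| ^ a * r)%N in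
  forall f : {mpoly F[n]},
    in_ideal (fun g => Igen u 1%:M k g \/ g = lin y ^+ k) f <->
    in_ideal (fun g => Igen u W (#|F| * k) g \/ g = lin y ^+ k) f.
Proof.
move=> k; rewrite {}/k => f.
have rWy0 : \rank (W :&: y)%MS = 0%N by rewrite (eqmx_rank hW1) mxrank0.
have rW : (\rank W).+1 = n.
  have := mxrank_sum_cap W y; rewrite (eqmx_rank hW2) mxrank1 rWy0 rank_rV hy; lia.
split; apply: in_ideal_trans => g; last first.
  case => [[H' [H'W [rH' ->]]] | ->]; last by apply: in_ideal_gen; right.
  pose H := (H' + y)%MS.
  have rHy : \rank (H' :&: y)%MS = 0%N.
    apply/eqP; rewrite -leqn0; have := mxrankS (capmxS H'W (submx_refl y)); by rewrite rWy0.
  have rH : (\rank H).+1 = n.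
    have := mxrank_sum_cap H' y; rewrite rHy rank_rV hy -/H; lia.
  have [c hc] := hyper_phi rH.
  have hH' : forall v, (v <= W)%MS -> (v <= H')%MS = (phi c v == 0).
    move=> v vW; rewrite -hc; apply/idP/idP => [vH|]; first exact: submx_trans vH (addsmxSl _ _).
    move=> vH; have : (v <= (H' + y) :&: W)%MS by rewrite sub_capmx vH vW.
    rewrite -(matrix_modl _ H'W) capmxC => /submx_trans; apply.
    by rewrite addsmx_sub submx_refl /= (submx_trans (proj1 (andP hW1))) ?sub0mx.
  have yH : (y <= H)%MS by exact: addsmxSr.
  have [kk kk0 [t e]] := core hu hy hW1 hW2 a hr hc hH' yH.
  have hk1 : kk^-1%:A * kk%:A = 1 :> {mpoly F[n]} by rewrite -scalerAl mul1r scalerA mulVf // scale1r.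
  have -> : VHU u H' W ^+ (#|F| * (#|F| ^ a * r)) =
     kk^-1%:A * VHU u H 1%:M ^+ (#|F| ^ a * r) + (- (kk^-1%:A * t)) * lin y ^+ (#|F| ^ a * r).
    by rewrite e -[kk *: _]mulr_algl mulrDr mulrA hk1 mul1r; ring.
  apply: in_idealD; apply: in_idealMl; apply: in_ideal_gen; [left | by right].
  by exists H; rewrite submx1 mxrank1.
case => [[H [_ [rH ->]]] | ->]; last by apply: in_ideal_gen; right.
rewrite mxrank1 in rH.
have [c hc] := hyper_phi rH.
case: (boolP (y <= H)%MS) => yH.
  pose H' := (H :&: W)%MS.
  have hH' : forall v, (v <= W)%MS -> (v <= H')%MS = (phi c v == 0).
    by move=> v vW; rewrite sub_capmx vW andbT hc.
  have [kk _ [t ->]] := core hu hy hW1 hW2 a hr hc hH' yH.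
  apply: in_idealD; last by rewrite mulrC; apply: in_idealMl; apply: in_ideal_gen; right.
  rewrite -mulr_algl; apply: in_idealMl; apply: in_ideal_gen; left.
  exists H'; split; first exact: capmxSr.
  split => //.
  have rHW : \rank (H + W)%MS = n.
    apply/eqP; rewrite eqn_leq rank_leq_col /=.
    rewrite -{1}(mxrank1 F n); apply: mxrankS.
    apply: submx_trans (proj2 (andP hW2)) _.
    by rewrite addsmx_sub addsmxSr (submx_trans yH) ?addsmxSl.
  have := mxrank_sum_cap H W; rewrite rHW -/H'; lia.
have hl0 : <<y>>%MS \in lines 1%:M by apply/imsetP; exists y; rewrite // inE hy submx1.
have nl0 : ~~ (<<y>>%MS <= H)%MS by rewrite genmxE.
rewrite /VHU (bigD1 <<y>>%MS) /=; last by rewrite hl0 nl0.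
have [_ ul] := hu _ hl0; move: ul; rewrite genmxE => /sub_rVP [b ->].
rewrite linZ.
set rest := (X in _ *: _ * X).
have -> : (b *: lin y * rest) ^+ (#|F| ^ a * r) = (b ^+ (#|F| ^ a * r) *: rest ^+ (#|F| ^ a * r)) * lin y ^+ (#|F| ^ a * r).
  by rewrite -scalerAl exprZn exprMn -scalerAl mulrC.
by apply: in_idealMl; apply: in_ideal_gen; right.
Qed.
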